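(* Let $L\ge 2$. (i) Every triangulation of $[0,1]^L$ induced by a generic fitness landscape whose fitness graph is a Haldane graph has $2^{L-1}$ isolated genotypes. (ii) For $L\ge 3$, no generic fitness landscape whose fitness graph is a Haldane graph induces a staircase triangulation. (iii) For every $L$, there exists a generic fitness landscape whose fitness graph is a Haldane graph and which induces a corner-cut triangulation.
   Context: Genotypes $g\in\{0,1\}^L$ are vertices of $[0,1]^L$. The triangulation induced by $w:\{0,1\}^L\to\mathbb{R}_{\ge 0}$ is the regular subdivision of $[0,1]^L$ obtained by projecting the upper faces of $\mathrm{conv}\{(g,w_g)\}$; $w$ is generic if all $w_g$ are distinct and this subdivision is a triangulation. The fitness graph directs each cube edge toward the genotype of higher fitness; a peak is a genotype with all neighbours of lower fitness. A Haldane graph is a fitness graph with the maximal possible number $2^{L-1}$ of peaks. A genotype $g$ is isolated (in a triangulation) if there is no genotype $g'$ at Hamming distance $2$ from $g$ such that $g,g'$ belong to a common simplex. A corner simplex consists of a vertex and its $L$ Hamming neighbours; a corner-cut triangulation is one having $2^{L-1}$ corner simplices. The standard staircase triangulation consists of the $L!$ simplices formed by the genotypes along a walk from $0\cdots0$ to $1\cdots1$ in which each step changes one $0$ to a $1$; a staircase triangulation is its image under any cube symmetry (coordinate permutations and bit flips). *)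

(* Defs.v *)
From HB Require Import structures.
From mathcomp Require Import all_boot all_order all_algebra all_fingroup.
Set Implicit Arguments. Unset Strict Implicit. Unset Printing Implicit Defensive.
Import Order.TTheory GRing.Theory Num.Theory.
Local Open Scope ring_scope.

(* Genotypes g in {0,1}^L, seen as vertices of the cube [0,1]^L. *)
Definition geno (L : nat) := {ffun 'I_L -> bool}.

Definition hamming L (g g' : geno L) : nat := #|[set i | g i != g' i]|.

Definition affv (R : numDomainType) L (a : 'I_L -> R) (b : R) (g : geno L) : R :=
  \sum_(i < L) a i * (g i)%:R + b.

(* S affinely spans R^L: the only affine function vanishing on S is zero *)
Definition affine_spanning (R : numDomainType) L (S : {set geno L}) : Prop :=
  forall (c : 'I_L -> R) (d : R),
    (forall g, g \in S -> affv c d g = 0) -> (forall i, c i = 0) /\ d = 0.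

(* S is a maximal cell of the regular subdivision induced by w: the set of
   vertices of a full-dimensional upper face of conv{(g, w g)}, i.e. the
   vertices on which some affine function lying weakly above w is attained,
   the face projecting to a full-dimensional polytope. *)
Definition cell (R : numDomainType) L (w : geno L -> R) (S : {set geno L}) : Prop :=
  exists (a : 'I_L -> R) (b : R),
    (forall g, w g <= affv a b g) /\
    (forall g, g \in S <-> w g = affv a b g) /\
    affine_spanning R S.

(* generic: distinct values, and the subdivision is a triangulation
   (every maximal cell is a simplex, i.e. has L+1 vertices) *)
Definition generic (R : numDomainType) L (w : geno L -> R) : Prop :=
  injective w /\ forall S, cell w S -> #|S| = L.+1.

Definition nonneg (R : numDomainType) L (w : geno L -> R) : Prop :=
  forall g, 0 <= w g.

Definition peak (R : numDomainType) L (w : geno L -> R) (g : geno L) : bool :=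
  [forall g' : geno L, (hamming g g' == 1)%N ==> (w g' < w g)].

(* the fitness graph of w is a Haldane graph: it has 2^(L-1) peaks *)
Definition haldane (R : numDomainType) L (w : geno L -> R) : Prop :=
  #|[set g | peak w g]| = (2 ^ L.-1)%N.

Definition card_prop (T : finType) (P : T -> Prop) (n : nat) : Prop :=
  exists A : {set T}, #|A| = n /\ forall x, x \in A <-> P x.

Definition isolated (R : numDomainType) L (w : geno L -> R) (g : geno L) : Prop :=
  ~ exists g' : geno L, hamming g g' = 2%N /\
      exists S, cell w S /\ g \in S /\ g' \in S.

Definition corner L (v : geno L) : {set geno L} :=
  v |: [set g | hamming v g == 1%N].

Definition corner_cut (R : numDomainType) L (w : geno L -> R) : Prop :=
  card_prop (fun S : {set geno L} => cell w S /\ exists v, S = corner v)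
            (2 ^ L.-1)%N.

(* standard staircase simplex for a permutation s: the genotypes along the
   walk 0..0 -> 1..1 flipping coordinates s 0, s 1, ..., s (L-1) in order;
   the k-th vertex has bit i set iff i is among s 0, ..., s (k-1). *)
Definition std_simplex L (s : {perm 'I_L}) : {set geno L} :=
  [set [ffun i => ((s^-1)%g i < k)%N] | k : 'I_L.+1].

Definition cube_sym L (p : {perm 'I_L}) (f : geno L) (g : geno L) : geno L :=
  [ffun i => g (p i) (+) f i].

Definition staircase (R : numDomainType) L (w : geno L -> R) : Prop :=
  exists (p : {perm 'I_L}) (f : geno L),
    forall S, cell w S <->
      exists s : {perm 'I_L}, S = [set cube_sym p f g | g in std_simplex s].

(* Main.v *)
Require Import Defs.
From HB Require Import structures.
From mathcomp Require Import all_boot all_order all_algebra all_fingroup.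
From mathcomp Require Import zify ring lra.
From Stdlib Require Import Classical.
Import Order.TTheory GRing.Theory Num.Theory.
Local Open Scope ring_scope.
Set Implicit Arguments. Unset Strict Implicit. Unset Printing Implicit Defensive.

Definition flip L (i : 'I_L) (g : geno L) : geno L :=
  [ffun k => if k == i then ~~ g k else g k].

Lemma flipK L (i : 'I_L) : involutive (flip i).
Proof. by move=> g; apply/ffunP=> k; rewrite !ffunE; case: eqP => // _; rewrite negbK. Qed.

Lemma flip_inj L (i : 'I_L) : injective (flip i).
Proof. exact: inv_inj (flipK i). Qed.

Lemma flipC L (i j : 'I_L) g : flip i (flip j g) = flip j (flip i g).
Proof. by apply/ffunP=> k; rewrite !ffunE; case: eqP; case: eqP. Qed.

Lemma hammingC L (g g' : geno L) : hamming g g' = hamming g' g.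
Proof. by rewrite /hamming; apply: eq_card => k; rewrite !inE eq_sym. Qed.

Lemma hamming_flip L (i : 'I_L) g : hamming g (flip i g) = 1%N.
Proof.
rewrite /hamming (_ : [set _ | _] = [set i]) ?cards1 //.
by apply/setP=> k; rewrite !inE ffunE; case: (k =P i) => [->|_]; rewrite ?eqxx //; case: (g _).
Qed.

Lemma hamming_flip2 L (i j : 'I_L) g : i != j -> hamming g (flip i (flip j g)) = 2%N.
Proof.
move=> ij; rewrite /hamming (_ : [set _ | _] = [set i; j]) ?cards2 ?ij //.
apply/setP=> k; rewrite !inE !ffunE.
case: (k =P i) => [Hk|_].
  subst k; rewrite (negbTE ij) /=; by case: (g _).
case: (k =P j) => [Hk|_] /=; last by rewrite eqxx.
by subst k; case: (g _).
Qed.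

Lemma hamming1P L (g g' : geno L) : hamming g g' = 1%N -> exists i, g' = flip i g.
Proof.
move=> /eqP/cards1P [i Hi]; exists i; apply/ffunP=> k; rewrite ffunE.
move/setP/(_ k): Hi; rewrite !inE.
by case: (k == i) => /=; case: (g k); case: (g' k).
Qed.

Lemma hamming2P L (g g' : geno L) : hamming g g' = 2%N ->
  exists i j, i != j /\ g' = flip i (flip j g).
Proof.
move=> /eqP/cards2P [i [j [ij Hi]]]; exists i, j; split => //; apply/ffunP=> k.
rewrite !ffunE.
move/setP/(_ k): Hi; rewrite !inE.
case: (k =P i) => [Hk|_]; [subst k; rewrite (negbTE ij) /= | case: (k == j) => /=];
  by case: (g _); case: (g' _).
Qed.

Lemma hamming0 L (g g' : geno L) : hamming g g' = 0%N -> g = g'.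
Proof.
move=> /eqP; rewrite cards_eq0 => /eqP H; apply/ffunP=> k.
move/setP/(_ k): H; rewrite !inE => /negbFE/eqP.
done.
Qed.

Lemma hamming_refl L (g : geno L) : hamming g g = 0%N.
Proof. by apply/eqP; rewrite cards_eq0; apply/eqP/setP=> k; rewrite !inE eqxx. Qed.

Definition ev L (g : geno L) : bool := ~~ odd #|[set k | g k]|.

Lemma ev_flip L (i : 'I_L) g : ev (flip i g) = ~~ ev g.
Proof.
rewrite /ev negbK.
case Hgi: (g i).
- have -> : [set k | flip i g k] = [set k | g k] :\ i.
    by apply/setP=> k; rewrite !inE ffunE; case: (k =P i) => [Hk|//]; subst k; rewrite Hgi ?eqxx.
  rewrite (cardsD1 i [set k | g k]) inE Hgi /=; by case: odd.
- have -> : [set k | flip i g k] = i |: [set k | g k].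
    by apply/setP=> k; rewrite !inE ffunE; case: (k =P i) => [Hk|//]; subst k; rewrite Hgi ?eqxx.
  rewrite cardsU1 inE Hgi /=; by case: odd.
Qed.
Section Aff.
Variable R : realFieldType.
Variable L : nat.
Implicit Types (g v x : geno L) (a c : 'I_L -> R) (b d : R).

Lemma affv_lin a b c d t g :
  affv (fun i => a i + t * c i) (b + t * d) g = affv a b g + t * affv c d g.
Proof.
rewrite /affv mulrDr big_distrr /=.
rewrite addrACA -big_split /=; congr (_ + _); apply: eq_bigr => i _; ring.
Qed.

Lemma affv_square a b g (i j : 'I_L) : i != j ->
  affv a b g + affv a b (flip i (flip j g)) = affv a b (flip i g) + affv a b (flip j g).
Proof.
move=> ij; rewrite /affv addrACA [RHS]addrACA -!big_split /=; congr (_ + _).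
apply: eq_bigr => k _; rewrite !ffunE -!mulrDr; congr (_ * _).
case: (k =P i) => [Hk|_]; [subst k; rewrite (negbTE ij) /= | case: (k == j) => /=];
  by rewrite // addrC.
Qed.

Lemma affv_ind v (c0 : R) (D : 'I_L -> R) :
  exists a b, forall x, affv a b x = c0 + \sum_k D k * (x k != v k)%:R.
Proof.
exists (fun k => if v k then - D k else D k), (c0 + \sum_k (if v k then D k else 0)).
move=> x; rewrite /affv addrCA; congr (_ + _).
rewrite -big_split /=; apply: eq_bigr => k _.
by case: (v k); case: (x k) => /=; ring.
Qed.

Lemma affv_zero c d : (forall g, affv c d g = 0) -> (forall i, c i = 0) /\ d = 0.
Proof.
move=> H.
have Hd : d = 0.
  have := H [ffun => false]; rewrite /affv big1 ?add0r // => k _; by rewrite ffunE mulr0.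
split=> // i; have := H (flip i [ffun => false]).
rewrite /affv Hd addr0 (bigD1 i) //= big1 ?addr0 ?ffunE ?eqxx ?mulr1 // => k /negbTE ki.
by rewrite ffunE ki ffunE mulr0.
Qed.

Lemma flip_ind (i : 'I_L) v k : ((flip i v) k != v k) = (k == i).
Proof. by rewrite ffunE; case: (k == i) => //=; case: (v k). Qed.

Lemma sum_ind_flip (D : 'I_L -> R) (i : 'I_L) v :
  \sum_k D k * ((flip i v) k != v k)%:R = D i.
Proof.
rewrite (bigD1 i) //= flip_ind eqxx mulr1 big1 ?addr0 // => k /negbTE ki.
by rewrite flip_ind ki mulr0.
Qed.

Lemma hamming_sum v x : (hamming v x)%:R = \sum_k (x k != v k)%:R :> R.
Proof.
rewrite /hamming -sum1_card natr_sum big_mkcond /=; apply: eq_bigr => k _.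
by rewrite inE eq_sym; case: (_ != _).
Qed.

End Aff.
Lemma dep_lemma (R : fieldType) (T : finType) (E : {set T}) (m : nat) (v : T -> 'I_m -> R) :
  (m < #|E|)%N ->
  exists lam : T -> R, (exists2 g, g \in E & lam g != 0) /\
     forall j, \sum_(g in E) lam g * v g j = 0.
Proof.
move=> Hm.
have [x0 x0E] : exists x0, x0 \in E.
  by apply/set0Pn; rewrite -card_gt0; apply: leq_ltn_trans Hm.
pose A : 'M[R]_(#|E|, m) := \matrix_(i, j) v (enum_val i) j.
have KA : kermx A != 0.
  rewrite kermx_eq0 /row_free; apply/negP=> /eqP H.
  by move: (rank_leq_col A); rewrite H leqNgt Hm.
have [r [c Hrc]] : exists r c, kermx A r c != 0.
  apply: NNPP => H; move/eqP: KA; apply; apply/matrixP => r c; rewrite [RHS]mxE.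
  by apply/eqP/negPn/negP => Hn; apply: H; exists r, c.
pose lam g := if g \in E then kermx A r (enum_rank_in x0E g) else 0.
have lamE i : lam (enum_val i) = kermx A r i.
  by rewrite /lam enum_valP enum_valK_in.
exists lam; split.
  by exists (enum_val c); [exact: enum_valP | rewrite lamE].
move=> j; rewrite big_enum_val /=.
move/matrixP/(_ r j): (mulmx_ker A); rewrite mxE [RHS]mxE => H.
rewrite -[X in _ = X]H.
by apply: eq_bigr => i _; rewrite lamE; congr (_ * _); rewrite mxE.
Qed.
Section Cells.
Variable R : realFieldType.
Variable L : nat.
Implicit Types (g v x : geno L) (a c : 'I_L -> R) (b d : R) (w : geno L -> R).

Definition ext (g : geno L) (j : 'I_L.+1) : R :=
  oapp (fun k => (g k)%:R) 1 (unlift ord_max j).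

Lemma sum_ordS (F : 'I_L.+1 -> R) :
  \sum_(i < L.+1) F i = \sum_(k < L) F (lift ord_max k) + F ord_max.
Proof.
rewrite big_ord_recr /=; congr (_ + _); apply: eq_bigr => k _; congr F.
by apply: val_inj; rewrite [RHS]lift_max.
Qed.

Lemma affv_ext a b g :
  affv a b g = \sum_(j < L.+1) oapp a b (unlift ord_max j) * ext g j.
Proof.
rewrite sum_ordS /ext /affv unlift_none /= mulr1; congr (_ + _).
by apply: eq_bigr => k _; rewrite liftK.
Qed.

Lemma spanning_card (S : {set geno L}) : affine_spanning R S -> (L.+1 <= #|S|)%N.
Proof.
move=> HS; rewrite leqNgt; apply/negP => Hlt.
have HT : (#|S| < #|[set: 'I_L.+1]|)%N by rewrite cardsT card_ord.
have [lam [[j _ Hj] Hsum]] :=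
  dep_lemma (fun (i : 'I_L.+1) (j : 'I_#|S|) => ext (enum_val j) i) HT.
have Hv : forall g, g \in S -> affv (fun k => lam (lift ord_max k)) (lam ord_max) g = 0.
  move=> g gS; have := Hsum (enum_rank_in gS g); rewrite enum_rankK_in // => H0.
  rewrite affv_ext -[X in _ = X]H0.
  apply: eq_big => [i|i _]; first by rewrite inE.
  congr (_ * _).
  by case: (unliftP ord_max i) => [k ->|->]; rewrite ?liftK ?unlift_none.
have [Hc Hd] := HS _ _ Hv.
move: Hj; case: (unliftP ord_max j) => [k ->|->]; by rewrite ?Hc ?Hd eqxx.
Qed.

Lemma dep_points (E : {set geno L}) : (L.+1 < #|E|)%N ->
  exists lam : geno L -> R, (exists2 g, g \in E & lam g != 0) /\
    forall a b, \sum_(g in E) lam g * affv a b g = 0.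
Proof.
move=> HE; have [lam [Hnz Hs]] := dep_lemma (fun g j => ext g j) HE.
exists lam; split => // a b.
under eq_bigr => g _ do rewrite affv_ext big_distrr /=.
rewrite exchange_big /= big1 // => j _.
under eq_bigr => g _ do rewrite mulrCA.
by rewrite -big_distrr /= Hs mulr0.
Qed.

Lemma affv_opp c d g : affv (fun i => - c i) (- d) g = - affv c d g.
Proof. by rewrite /affv opprD -sumrN; congr (_ + _); apply: eq_bigr => i _; rewrite mulNr. Qed.

Lemma grow w : forall n a b, (#|[set g | w g != affv a b g]| < n)%N ->
  (forall g, w g <= affv a b g) ->
  exists S, cell w S /\ forall g, w g = affv a b g -> g \in S.
Proof.
elim=> [|n IH] a b //= Hn Hle.
set E := [set g | w g == affv a b g].
case: (classic (affine_spanning R E)) => Hsp.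
  exists E; split; last by move=> g Hg; rewrite inE Hg.
  exists a, b; split => //; split => // g; rewrite inE; split; by move/eqP.
have [c [d [g1 [HcE Hg1]]]] : exists c d g1,
    (forall g, g \in E -> affv c d g = 0) /\ affv c d g1 < 0.
  move: Hsp; rewrite /affine_spanning => /not_all_ex_not [c /not_all_ex_not [d H]].
  have [Hv Hnz] := imply_to_and _ _ H.
  have [g1 Hg1] : exists g1, affv c d g1 != 0.
    apply: NNPP => Hn'; apply: Hnz; apply: affv_zero => g.
    by apply/eqP/negPn/negP => Hg; apply: Hn'; exists g.
  case: (ltrgtP (affv c d g1) 0) => Hs.
  - by exists c, d, g1.
  - exists (fun i => - c i), (- d), g1; rewrite affv_opp oppr_lt0; split => // g gE.
    by rewrite affv_opp Hv // oppr0.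
  - by rewrite Hs eqxx in Hg1.
set N := [set g | affv c d g < 0].
have g1N : g1 \in N by rewrite inE.
pose r g := (affv a b g - w g) / (- affv c d g).
pose gs := [arg min_(g < g1 in N) r g]%O.
have [gsN Hmin] : gs \in N /\ forall g, g \in N -> r gs <= r g.
  rewrite /gs; case: Order.TotalTheory.arg_minP => // g0 H0 Hm; split => // g gN; exact: Hm.
have Hr0 : 0 <= r gs.
  rewrite /r divr_ge0 // ?subr_ge0 ?Hle // oppr_ge0; rewrite inE in gsN; exact: ltW.
pose t := r gs.
have Hnew g : affv (fun i => a i + t * c i) (b + t * d) g = affv a b g + t * affv c d g.
  exact: affv_lin.
have Hle' g : w g <= affv (fun i => a i + t * c i) (b + t * d) g.
  rewrite Hnew; case: (ltP (affv c d g) 0) => Hg.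
  - have gN : g \in N by rewrite inE.
    have := Hmin g gN; rewrite /t {1}/r ler_pdivlMr ?oppr_gt0 // => H1.
    rewrite -/(r gs) in H1.
    have -> : r gs * affv c d g = - (r gs * - affv c d g) by rewrite mulrN opprK.
    move: H1; set X := r gs * - affv c d g; lra.
  - apply: le_trans (Hle g) _; rewrite lerDl mulr_ge0 //.
have Heq g : w g = affv a b g -> w g = affv (fun i => a i + t * c i) (b + t * d) g.
  by move=> H; rewrite Hnew HcE ?mulr0 ?addr0 // inE H.
have Hgs : w gs = affv (fun i => a i + t * c i) (b + t * d) gs.
  rewrite Hnew /t /r; rewrite inE in gsN.
  have Hc : affv c d gs != 0 by rewrite lt_eqF.
  by field.
have Hcard : (#|[set g | w g != affv (fun i => (a i + t * c i)%R) (b + t * d)%R g]| < n)%N.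
  rewrite -ltnS; apply: leq_trans _ Hn; rewrite ltnS.
  apply: (@leq_ltn_trans #|[set g | w g != affv a b g] :\ gs|).
    apply: subset_leq_card; apply/subsetP => g; rewrite !inE.
    case: (g =P gs) => [->|_]; first by rewrite Hgs eqxx.
    by apply: contra => /eqP /Heq ->.
  rewrite [X in (_ < X)%N](cardsD1 gs) !inE.
  case: (w gs =P affv a b gs) => [Habs|//]; rewrite inE in gsN.
  by have := HcE gs; rewrite inE Habs eqxx => /(_ isT) H0; rewrite H0 ltxx in gsN.
have [S [HS HSg]] := IH _ _ Hcard Hle'.
by exists S; split => // g Hg; apply: HSg; apply: Heq.
Qed.

End Cells.
Lemma card_geno L : #|{: geno L}| = (2 ^ L)%N.
Proof. by rewrite card_ffun card_bool card_ord. Qed.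

Lemma pow2_half L : (0 < L)%N -> (2 ^ L - 2 ^ L.-1 = 2 ^ L.-1)%N.
Proof. by case: L => // L _; rewrite expnS /=; lia. Qed.

Section Peaks.
Variable R : realFieldType.
Variable L : nat.
Implicit Types (g v x : geno L) (a c : 'I_L -> R) (b d : R) (w : geno L -> R).

Lemma peak_nbr w g g' : peak w g -> hamming g g' = 1%N -> w g' < w g.
Proof. by move=> /forallP/(_ g')/implyP H H1; apply: H; rewrite H1. Qed.

Lemma peak_adj w g g' : peak w g -> hamming g g' = 1%N -> ~~ peak w g'.
Proof.
move=> Pg H1; apply/negP => Pg'.
have := peak_nbr Pg H1; have := peak_nbr Pg' (etrans (hammingC _ _) H1).
move=> A B; have := lt_trans A B; by rewrite ltxx.
Qed.

Lemma haldane_flip w (i : 'I_L) g : haldane w -> peak w (flip i g) = ~~ peak w g.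
Proof.
move=> Hh.
have L0 : (0 < L)%N by case: i => /= k; case: L => //.
case Pg: (peak w g).
  by apply/negbTE; apply: (peak_adj Pg); rewrite hamming_flip.
set P := [set g | peak w g].
have HQ : flip i @: P \subset ~: P.
  apply/subsetP => x /imsetP [h hP ->]; rewrite !inE; rewrite inE in hP.
  by apply: (peak_adj hP); rewrite hamming_flip.
have : flip i @: P = ~: P.
  apply/eqP; rewrite eqEcard HQ /=.
  rewrite card_imset; last exact: flip_inj.
  move: (cardsC P) (pow2_half L0); rewrite card_geno /P Hh.
  by move=> H1 H2; rewrite -H2 -{1}H1 addKn.
move/setP/(_ g); rewrite !inE Pg /= => /imsetP [h hP ->].
by rewrite flipK; rewrite inE in hP.
Qed.

Lemma valley_isolated w g : haldane w -> ~~ peak w g -> isolated w g.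
Proof.
move=> Hh Hg [g' [H2 [S [[a [b [Hle [HS _]]]] [gS g'S]]]]].
have [i [j [ij Hg']]] := hamming2P H2.
have P1 : peak w (flip i g) by rewrite haldane_flip.
have P2 : peak w (flip j g) by rewrite haldane_flip.
have W1 : w g < w (flip i g) by apply: (peak_nbr P1); rewrite hammingC hamming_flip.
have W2 : w g' < w (flip j g) by apply: (peak_nbr P2); rewrite Hg' hamming_flip.
have E1 := proj1 (HS g) gS; have E2 := proj1 (HS g') g'S.
have := affv_square a b g ij; rewrite -Hg' -E1 -E2.
have := Hle (flip i g); have := Hle (flip j g); lra.
Qed.

Lemma sum_ind_flip2 (D : 'I_L -> R) (i j : 'I_L) v : i != j ->
  \sum_k D k * ((flip i (flip j v)) k != v k)%:R = D i + D j.
Proof.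
move=> ij.
have Hk k : ((flip i (flip j v)) k != v k) = (k == i) || (k == j).
  rewrite !ffunE; case: (k =P i) => [Hk|_]; first by subst k; rewrite (negbTE ij) /=; case: (v _).
  by case: (k == j) => /=; case: (v k).
have ji : j != i by rewrite eq_sym.
rewrite (bigD1 i) //= (bigD1 j) //= !Hk !eqxx /= orbT /= addrA.
rewrite big1 ?addr0 ?mulr1 // => k /andP [ki kj]; by rewrite Hk (negbTE ki) (negbTE kj) mulr0.
Qed.

Lemma peak_not_isolated w g : (2 <= L)%N -> nonneg w -> haldane w -> peak w g ->
  ~ isolated w g.
Proof.
move=> HL Hnn Hh Pg; apply.
have i0L : (0 < L)%N by apply: leq_trans HL.
pose i0 : 'I_L := Ordinal i0L; pose i1 : 'I_L := Ordinal HL.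
have i01 : i0 != i1 by [].
pose g' := flip i0 (flip i1 g).
pose h1 := flip i0 g; pose h2 := flip i1 g.
have Pg' : peak w g' by rewrite /g' !(haldane_flip _ _ Hh) negbK.
have W1 : w h1 < w g by apply: (peak_nbr Pg); rewrite hamming_flip.
have W2 : w h2 < w g by apply: (peak_nbr Pg); rewrite hamming_flip.
have W1' : w h1 < w g'.
  have -> : h1 = flip i1 g' by rewrite /g' flipC flipK.
  by apply: (peak_nbr Pg'); rewrite hamming_flip.
have W2' : w h2 < w g'.
  have -> : h2 = flip i0 g' by rewrite /g' flipK.
  by apply: (peak_nbr Pg'); rewrite hamming_flip.
pose M := \sum_x w x + 1.
have HM x : w x < M.
  rewrite /M (bigD1 x) //= -addrA ltrDl ltr_pwDr ?ltr01 //.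
  by apply: sumr_ge0 => y _; apply: Hnn.
pose del := (w g' - w g) / 2.
pose D k := if (k == i0) || (k == i1) then del else M.
have [a [b Hab]] := affv_ind g (w g) D.
have Hsplit x : affv a b x = w g + del * (x i0 != g i0)%:R + del * (x i1 != g i1)%:R
    + \sum_(k | (k != i0) && (k != i1)) M * (x k != g k)%:R.
  rewrite Hab (bigD1 i0) //= (bigD1 i1) //= /D !eqxx /= ?orbT /= !addrA.
  by congr (_ + _); apply: eq_bigr => k /andP [/negbTE -> /negbTE ->].
have Hdel : w g + del = (w g + w g') / 2 by rewrite /del; field.
have Hdel2 : w g + del + del = w g' by rewrite /del; field.
have Hle : forall x, w x <= affv a b x.
  move=> x; rewrite Hsplit.
  have Hbase : 0 <= w g + del * (x i0 != g i0)%:R + del * (x i1 != g i1)%:R.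
    have := Hnn g; have := Hnn g'.
    by case: (x i0 != _); case: (x i1 != _) => /=; rewrite ?mulr1 ?mulr0 ?addr0; lra.
  case: (boolP [exists k, (k != i0) && (k != i1) && (x k != g k)]).
    case/existsP => k0 /andP [/andP [k0i0 k0i1] Hk0].
    rewrite (bigD1 k0) ?k0i0 ?k0i1 //= Hk0 mulr1.
    have Hrest : 0 <= \sum_(k | ((k != i0) && (k != i1)) && (k != k0)) M * (x k != g k)%:R.
      apply: sumr_ge0 => k _; apply: mulr_ge0 => //.
      by apply: le_trans (ltW (HM x)); apply: Hnn.
    have := HM x; lra.
  move=> /existsPn Hno.
  have Hx : forall k, (k != i0) && (k != i1) -> x k = g k.
    by move=> k Hk; have := Hno k; rewrite Hk /= => /negbNE /eqP.
  rewrite big1 ?addr0; last by move=> k /Hx ->; rewrite eqxx mulr0.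
  have Ex : x = [ffun k => if k == i0 then x i0 else if k == i1 then x i1 else g k].
    apply/ffunP => k; rewrite ffunE; case: (k =P i0) => [->//|/eqP ki0].
    case: (k =P i1) => [->//|/eqP ki1]; by rewrite Hx // ki0 ki1.
  case E0: (x i0 != g i0); case E1: (x i1 != g i1); rewrite /= ?mulr1 ?mulr0 ?addr0.
  - have -> : x = g'.
      rewrite Ex /g'; apply/ffunP => k; rewrite !ffunE.
      case: (k =P i0) => [->|_]; first by rewrite (_ : (i0 == i1) = false) //; case: (x i0) E0; case: (g i0).
      by case: (k =P i1) => [->|_] //; case: (x i1) E1; case: (g i1).
    by rewrite Hdel2.
  - have -> : x = h1.
      rewrite Ex /h1; apply/ffunP => k; rewrite !ffunE.
      case: (k =P i0) => [->|_]; first by case: (x i0) E0; case: (g i0).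
      by case: (k =P i1) => [->|_] //; case: (x i1) E1; case: (g i1).
    rewrite Hdel; lra.
  - have -> : x = h2.
      rewrite Ex /h2; apply/ffunP => k; rewrite !ffunE.
      case: (k =P i0) => [->|_]; first by rewrite (_ : (i0 == i1) = false) //; case: (x i0) E0; case: (g i0).
      by case: (k =P i1) => [->|_] //; case: (x i1) E1; case: (g i1).
    rewrite Hdel; lra.
  - have -> : x = g.
      rewrite Ex; apply/ffunP => k; rewrite !ffunE.
      case: (k =P i0) => [->|_]; first by case: (x i0) E0; case: (g i0).
      by case: (k =P i1) => [->|_] //; case: (x i1) E1; case: (g i1).
    by [].
have Eg : w g = affv a b g.
  by rewrite Hab big1 ?addr0 // => k _; rewrite eqxx mulr0.
have Eg' : w g' = affv a b g'.
  by rewrite Hab sum_ind_flip2 // /D !eqxx /= ?orbT -Hdel2 addrA.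
have [S [HS HSg]] := grow (n := (#|[set x | w x != affv a b x]|).+1) (ltnSn _) Hle.
exists g'; split; first by rewrite /g' hamming_flip2.
by exists S; split => //; split; apply: HSg.
Qed.

End Peaks.
Lemma part1 (R : realFieldType) L (hL : (2 <= L)%N) (w : geno L -> R) :
  nonneg w -> generic w -> haldane w -> card_prop (isolated w) (2 ^ L.-1)%N.
Proof.
move=> Hnn Hg Hh.
exists (~: [set g | peak w g]); split.
  have L0 : (0 < L)%N by apply: leq_trans hL.
  move: (cardsC [set g | peak w g]) (pow2_half L0); rewrite card_geno Hh.
  by move=> H1 H2; rewrite -H2 -{1}H1 addKn.
move=> g; rewrite !inE; split.
  exact: valley_isolated.
by move=> Hi; apply/negP => Pg; exact: (peak_not_isolated hL Hnn Hh Pg Hi).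
Qed.

Lemma hamming_cube L (p : {perm 'I_L}) (f x y : geno L) :
  hamming (cube_sym p f x) (cube_sym p f y) = hamming x y.
Proof.
rewrite /hamming -[RHS](card_preimset _ (@perm_inj _ p)); apply: eq_card => i.
by rewrite !inE !ffunE; case: (f i); case: (x _); case: (y _).
Qed.

Definition ee L (k : 'I_L.+1) : geno L := [ffun i => (((1 : {perm 'I_L})^-1)%g i < k)%N].

Lemma part2 (R : realFieldType) L (hL : (3 <= L)%N) (w : geno L -> R) :
  nonneg w -> generic w -> haldane w -> ~ staircase w.
Proof.
move=> Hnn Hg Hh [p [f Hst]].
have h0 : (0 < L)%N by apply: leq_trans hL.
have h1 : (1 < L)%N by apply: leq_trans hL.
pose i0 : 'I_L := Ordinal h0; pose i1 : 'I_L := Ordinal h1; pose i2 : 'I_L := Ordinal hL.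
have k0 : (0 < L.+1)%N by []. have k1 : (1 < L.+1)%N by lia.
have k2 : (2 < L.+1)%N by lia. have k3 : (3 < L.+1)%N by lia.
pose e0 := ee (Ordinal k0); pose e1 := ee (Ordinal k1).
pose e2 := ee (Ordinal k2); pose e3 := ee (Ordinal k3).
have E1 : e1 = flip i0 e0.
  apply/ffunP => j; rewrite !ffunE invg1 perm1.
  by case: j => [[|[|[|m]]] Hj].
have E2 : e2 = flip i0 (flip i1 e0).
  apply/ffunP => j; rewrite !ffunE invg1 perm1.
  by case: j => [[|[|[|m]]] Hj].
have E3 : e3 = flip i1 (flip i2 e1).
  apply/ffunP => j; rewrite !ffunE invg1 perm1.
  by case: j => [[|[|[|m]]] Hj].
pose S0 := [set cube_sym p f g | g in std_simplex (1 : {perm 'I_L})].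
have HS0 : cell w S0 by apply/Hst; exists 1%g.
have Hin k : cube_sym p f (ee k) \in S0.
  by apply: imset_f; apply/imsetP; exists k.
pose u k := cube_sym p f (ee k).
case Pu: (peak w (u (Ordinal k0))).
- have Hu1 : ~~ peak w (u (Ordinal k1)).
    apply: (peak_adj Pu); rewrite /u hamming_cube -/e0 -/e1 E1 hamming_flip //.
  apply: (valley_isolated Hh Hu1); exists (u (Ordinal k3)); split.
    by rewrite /u hamming_cube -/e1 -/e3 E3 hamming_flip2.
  by exists S0; split => //; split; apply: Hin.
- apply: (valley_isolated Hh (negbT Pu)); exists (u (Ordinal k2)); split.
    by rewrite /u hamming_cube -/e0 -/e2 E2 hamming_flip2.
  by exists S0; split => //; split; apply: Hin.
Qed.
Section Construction.
Variable R : realFieldType.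
Variable L : nat.
Hypothesis hL : (2 <= L)%N.
Variable t : R.
Hypothesis t0 : 0 < t.
Hypothesis t1 : t < 1.

Definition idx (g : geno L) : nat := (enum_rank g).+1.
Definition wt (g : geno L) : R := 4 * (ev g)%:R + t ^+ idx g.

Lemma tpow_bnd n : 0 < t ^+ n /\ t ^+ n <= 1.
Proof. by split; [apply: exprn_gt0 | apply: exprn_ile1 => //; apply: ltW]. Qed.

Lemma wt_ev g : ev g -> 4 < wt g /\ wt g <= 5.
Proof.
move=> E; rewrite /wt E mulr1; have [A B] := tpow_bnd (idx g).
move: A B; move: (t ^+ idx g) => x A B; split; lra.
Qed.

Lemma wt_odd g : ~~ ev g -> 0 < wt g /\ wt g <= 1.
Proof. by move=> /negbTE E; rewrite /wt E mulr0 add0r; apply: tpow_bnd. Qed.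

Lemma wt_nonneg : nonneg wt.
Proof.
move=> g; case E: (ev g); [have [A B] := wt_ev E | have [A B] := wt_odd (negbT E)]; lra.
Qed.

Lemma wt_inj : injective wt.
Proof.
move=> g g' H.
case E: (ev g); case E': (ev g').
- move: H; rewrite /wt E E' => /addrI /(ieexprIn t0 (negbT (lt_eqF t1))) /succn_inj /val_inj.
  exact: fintype.enum_rank_inj.
- have [A B] := wt_ev E; have [A' B'] := wt_odd (negbT E').
  exfalso; move: A B A' B'; rewrite H; move: (wt g') => y; lra.
- have [A B] := wt_odd (negbT E); have [A' B'] := wt_ev E'.
  exfalso; move: A B A' B'; rewrite H; move: (wt g') => y; lra.
- move: H; rewrite /wt E E' => /addrI /(ieexprIn t0 (negbT (lt_eqF t1))) /succn_inj /val_inj.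
  exact: fintype.enum_rank_inj.
Qed.

Lemma L0 : (0 < L)%N. Proof. by apply: leq_trans hL. Qed.
Definition j0 : 'I_L := Ordinal L0.
Definition j1 : 'I_L := Ordinal hL.
Lemma j01 : j0 != j1. Proof. by []. Qed.

Lemma peak_wt g : peak wt g = ev g.
Proof.
case E: (ev g).
  apply/forallP => g'; apply/implyP => /eqP /hamming1P [i ->].
  have E' : ~~ ev (flip i g) by rewrite ev_flip E.
  have [A B] := wt_ev E; have [A' B'] := wt_odd E'; lra.
apply/negbTE/negP => /forallP /(_ (flip j0 g)) /implyP; rewrite hamming_flip => /(_ isT).
have E' : ev (flip j0 g) by rewrite ev_flip E.
have [A B] := wt_odd (negbT E); have [A' B'] := wt_ev E'; lra.
Qed.

Lemma card_ev : #|[set g : geno L | ev g]| = (2 ^ L.-1)%N.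
Proof.
set P := [set g : geno L | ev g].
have HQ : flip j0 @: P = ~: P.
  apply/setP => g; rewrite !inE; apply/imsetP/idP.
    by case=> h; rewrite inE => Hh ->; rewrite ev_flip Hh.
  by move=> Hg; exists (flip j0 g); rewrite ?flipK // inE ev_flip.
have H1 : #|P| = #|~: P| by rewrite -HQ card_imset //; apply: flip_inj.
move: (cardsC P) (pow2_half L0); rewrite card_geno -H1.
move: (2 ^ L)%N (2 ^ L.-1)%N #|P| => X Y p; lia.
Qed.

Lemma wt_haldane : haldane wt.
Proof.
rewrite /haldane -card_ev; apply: eq_card => g; by rewrite !inE peak_wt.
Qed.

Lemma affv_diff (c : 'I_L -> R) d (x v : geno L) :
  affv c d x = affv c d v + \sum_k c k * ((x k)%:R - (v k)%:R).
Proof.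
rewrite /affv addrAC -big_split /=; congr (_ + _); apply: eq_bigr => k _; ring.
Qed.

Lemma corner_spanning (v : geno L) : affine_spanning R (corner v).
Proof.
move=> c d H.
have Hv : affv c d v = 0 by apply: H; rewrite /corner in_setU1 eqxx.
have Hc : forall i, c i = 0.
  move=> i; have : affv c d (flip i v) = 0.
    by apply: H; rewrite /corner in_setU1 inE hamming_flip eqxx orbT.
  rewrite (affv_diff _ _ _ v) Hv add0r (bigD1 i) //= big1 ?addr0.
    move/eqP; rewrite mulf_eq0 => /orP [/eqP //|]; rewrite ffunE eqxx.
    by case: (v i) => /=; rewrite ?subr0 ?sub0r ?oppr_eq0 oner_eq0.
  by move=> k /negbTE ki; rewrite ffunE ki subrr mulr0.
split => //; move: Hv; rewrite /affv big1 ?add0r // => k _; by rewrite Hc mul0r.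
Qed.

Lemma corner_cell v : ~~ ev v -> cell wt (corner v).
Proof.
move=> Hv.
pose D k := wt (flip k v) - wt v.
have HD k : 3 < D k.
  have Ek : ev (flip k v) by rewrite ev_flip.
  have [A B] := wt_odd Hv; have [A' B'] := wt_ev Ek.
  by rewrite /D; lra.
have [a [b Hab]] := affv_ind v (wt v) D.
exists a, b.
have Hkey g : (hamming v g = 0%N -> g = v) /\ (hamming v g = 1%N -> wt g = affv a b g) /\
              ((2 <= hamming v g)%N -> wt g < affv a b g).
  split; first by move/hamming0 ->.
  split; first by move/hamming1P => [i ->]; rewrite Hab sum_ind_flip /D addrC subrK.
  move=> H2; rewrite Hab.
  have Hs : 3 * (hamming v g)%:R <= \sum_k D k * (g k != v k)%:R.
    rewrite hamming_sum mulr_sumr; apply: ler_sum => k _.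
    by case: (_ != _); rewrite ?mulr1 ?mulr0 //; apply: ltW.
  have H2' : 2%:R <= (hamming v g)%:R :> R by rewrite ler_nat.
  have [A B] := wt_odd Hv.
  have Bg : wt g <= 5.
    case E: (ev g); [have [? ?] := wt_ev E | have [? ?] := wt_odd (negbT E)]; lra.
  move: Hs H2'; move: (hamming v g)%:R => hv; lra.
split.
  move=> g; have [K0 [K1 K2]] := Hkey g.
  case: (ltnP (hamming v g) 2) => H.
    move: H; case E: (hamming v g) => [|[|//]] _.
      by rewrite (K0 E) Hab big1 ?addr0 // => k _; rewrite eqxx mulr0.
    by rewrite (K1 E).
  exact: ltW (K2 H).
split; last exact: corner_spanning.
move=> g; have [K0 [K1 K2]] := Hkey g; rewrite /corner in_setU1 inE; split.
  case/orP => [/eqP ->|/eqP /K1 //].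
  by rewrite Hab big1 ?addr0 // => k _; rewrite eqxx mulr0.
move=> Heq; case: (ltnP (hamming v g) 2) => H.
  move: H; case E: (hamming v g) => [|[|//]] _.
    by rewrite (K0 E) eqxx.
  by rewrite orbT.
by have := K2 H; rewrite Heq ltxx.
Qed.

Lemma even_corner_not_cell v : ev v -> ~ cell wt (corner v).
Proof.
move=> Hv [a [b [Hle [HS _]]]].
have Hin g : g \in corner v -> wt g = affv a b g by move=> /HS.
have E0 := Hin v; rewrite /corner in_setU1 eqxx in E0.
have E1 := Hin (flip j0 v); rewrite /corner in_setU1 inE hamming_flip eqxx orbT in E1.
have E2 := Hin (flip j1 v); rewrite /corner in_setU1 inE hamming_flip eqxx orbT in E2.
have := affv_square a b v j01; rewrite -E0 // -E1 // -E2 //.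
have := Hle (flip j0 (flip j1 v)); have := wt_nonneg (flip j0 (flip j1 v)).
have [A B] := wt_ev Hv.
have Ev1 : ~~ ev (flip j0 v) by rewrite ev_flip Hv.
have Ev2 : ~~ ev (flip j1 v) by rewrite ev_flip Hv.
have [A1 B1] := wt_odd Ev1.
have [A2 B2] := wt_odd Ev2.
lra.
Qed.

Lemma corner_inj : {in [set v | ~~ ev v] &, injective (@corner L)}.
Proof.
move=> v v'; rewrite !inE => Hv Hv' H.
have : v' \in corner v by rewrite H /corner in_setU1 eqxx.
rewrite /corner in_setU1 inE => /orP [/eqP -> //|/eqP /hamming1P [i Ei]].
by move: Hv'; rewrite Ei ev_flip Hv.
Qed.

Lemma wt_corner_cut : corner_cut wt.
Proof.
exists [set corner v | v in [set v | ~~ ev v]]; split.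
  rewrite card_in_imset; last exact: corner_inj.
  have := cardsC [set g : geno L | ev g]; rewrite card_ev card_geno.
  have -> : ~: [set g : geno L | ev g] = [set v | ~~ ev v] by apply/setP => g; rewrite !inE.
  have := pow2_half L0; lia.
move=> S; split.
  case/imsetP => v; rewrite inE => Hv ->; split; [exact: corner_cell | by exists v].
case=> HS [v Sv]; apply/imsetP; exists v => //; rewrite inE.
apply/negP => Hv; apply: (even_corner_not_cell Hv); by rewrite -Sv.
Qed.

End Construction.
Section Generic.
Variable R : realFieldType.
Variable L : nat.

Definition QE (lam : geno L -> R) (E : {set geno L}) : {poly R} :=
  \sum_(g in E) lam g *: ((4 * (ev g)%:R)%:P + 'X^(idx g)).

Lemma QE_horner (lam : geno L -> R) (E : {set geno L}) (t : R) : (QE lam E).[t] = \sum_(g in E) lam g * wt t g.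
Proof.
rewrite /QE horner_sum; apply: eq_bigr => g _.
by rewrite hornerZ hornerD hornerC hornerXn.
Qed.

Lemma QE_neq0 (lam : geno L -> R) (E : {set geno L}) g0 : g0 \in E -> lam g0 != 0 -> QE lam E != 0.
Proof.
move=> g0E Hl; apply/eqP => H0.
have := congr1 (fun p : {poly R} => p`_(idx g0)) H0; rewrite coef0 /QE coef_sum.
rewrite (bigD1 g0) //= big1 ?addr0.
  by rewrite coefZ coefD coefC coefXn eqxx /= add0r mulr1 => /eqP; rewrite (negbTE Hl).
move=> g /andP [_ gg0]; rewrite coefZ coefD coefC coefXn /= add0r.
suff -> : (idx g0 == idx g) = false by rewrite mulr0.
by apply/negbTE; apply: contra gg0 => /eqP /succn_inj /val_inj /fintype.enum_rank_inj ->.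
Qed.

Lemma polyQ (s : seq {set geno L}) : exists Q : {poly R}, Q != 0 /\
  forall t, ~~ root Q t -> forall E, E \in s -> (L.+1 < #|E|)%N ->
  forall a b, ~ (forall g, g \in E -> wt t g = affv a b g).
Proof.
elim: s => [|E s [Q [HQ IH]]].
  by exists 1; split; [exact: oner_neq0 | move=> t _ E].
case: (ltnP L.+1 #|E|) => HE; last first.
  exists Q; split => // t Ht E'; rewrite inE => /orP [/eqP ->|]; last exact: IH.
  by rewrite ltnNge HE.
have [lam [[g0 g0E Hl] Hs]] := @dep_points R L E HE.
exists (QE lam E * Q); split; first by rewrite mulf_neq0 // (QE_neq0 g0E Hl).
move=> t; rewrite rootM negb_or => /andP [H1 H2] E'; rewrite inE => /orP [/eqP ->|]; last exact: IH.
move=> _ a b Hab; move: H1; rewrite /root QE_horner.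
under eq_bigr => g gE do rewrite Hab //.
by rewrite Hs eqxx.
Qed.

Lemma good_t : exists t : R, 0 < t /\ t < 1 /\
  forall E : {set geno L}, (L.+1 < #|E|)%N ->
  forall a b, ~ (forall g, g \in E -> wt t g = affv a b g).
Proof.
have [Q [HQ HQt]] := polyQ (enum {set geno L}).
pose ts := mkseq (fun k => (k.+2%:R)^-1 : R) (size Q).
have Hu : uniq ts.
  apply: mkseq_uniq => m n /invr_inj /eqP; rewrite eqr_nat => /eqP; lia.
have : ~~ all (root Q) ts.
  apply/negP => Hall; have := max_poly_roots HQ Hall Hu; by rewrite size_mkseq ltnn.
case/allPn => t /mapP [k _ ->] Hr.
exists (k.+2%:R^-1); split; first by rewrite invr_gt0 ltr0n.
split; first by rewrite invf_lt1 ?ltr0n // ltr1n.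
by move=> E HE a b; apply: (HQt _ Hr E _ HE); rewrite mem_enum.
Qed.

End Generic.

Lemma part3 (R : realFieldType) L (hL : (2 <= L)%N) :
  exists w : geno L -> R, nonneg w /\ generic w /\ haldane w /\ corner_cut w.
Proof.
have [t [t0 [t1 Ht]]] := good_t R L.
exists (wt t); split; first exact: wt_nonneg.
split.
  split; first exact: wt_inj.
  move=> S [a [b [Hle [HS Hsp]]]]; apply/eqP; rewrite eqn_leq (spanning_card Hsp) andbT.
  rewrite leqNgt; apply/negP => HE; apply: (Ht S HE a b) => g /HS //.
split; first exact: wt_haldane.
exact: wt_corner_cut.
Qed.

Theorem mainTheorem8 (R : realFieldType) (L : nat) (hL : (2 <= L)%N) :
  (* (i) *)
  (forall w : geno L -> R, nonneg w -> generic w -> haldane w ->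
     card_prop (isolated w) (2 ^ L.-1)%N) /\
  (* (ii) *)
  ((3 <= L)%N -> forall w : geno L -> R, nonneg w -> generic w -> haldane w ->
     ~ staircase w) /\
  (* (iii) *)
  (exists w : geno L -> R, nonneg w /\ generic w /\ haldane w /\ corner_cut w).
Proof.
split; first by move=> w; apply: part1.
split; first by move=> H3 w; apply: part2.
exact: part3.
Qed.
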